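(* Let $\mathcal{L}=(L,\wedge,\vee,0,1)$ be a complete lattice and let $p\in L$ be strongly irreducible in $L$. Then $p$ is irreducible in $L$, and at least one of the following holds: (i) there exists $p'\in L$ with $p'<p$ and an element $q\in L$ with $q\geq p'$ such that $p$ is a pseudo-complement of $q$ in the lattice $\{x\in L\mid p'\leq x\}$ and the interval $[p',q]$ is uniform; (ii) $p$ is a waist in $L$.
   Context: For a lower semilattice $(L,\wedge)$, an element $p$ is irreducible if for all $a,b\in L$ with $p\leq a$ and $p\leq b$: $a\wedge b\leq p$ implies $a\leq p$ or $b\leq p$; it is strongly irreducible if this implication holds for all $a,b\in L$. For $a\leq b$, $[a,b]=\{x\in L\mid a\leq x\leq b\}$. A lower semilattice with least element $z$ is uniform if $z$ is irreducible in it, i.e. $x\wedge y=z$ implies $x=z$ or $y=z$. A pseudo-complement of an element $a$ in a semilattice with least element $z$ is the greatest element $x$ with $a\wedge x=z$. A waist is an element comparable to every element of $L$. *)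

(* Defs.v *)
From mathcomp Require Import all_boot all_order.
Set Implicit Arguments. Unset Strict Implicit. Unset Printing Implicit Defensive.
Import Order.TTheory.
Local Open Scope order_scope.

Definition complete_lattice {d} (L : latticeType d) : Prop :=
  forall S : L -> Prop, exists s : L,
    (forall x, S x -> x <= s) /\
    (forall u, (forall x, S x -> x <= u) -> s <= u).

Definition irreducible {d} (L : latticeType d) (p : L) : Prop :=
  forall a b : L, p <= a -> p <= b -> a `&` b <= p -> a <= p \/ b <= p.

Definition strongly_irreducible {d} (L : latticeType d) (p : L) : Prop :=
  forall a b : L, a `&` b <= p -> a <= p \/ b <= p.

Definition uniform_interval {d} (L : latticeType d) (lo hi : L) : Prop :=
  forall x y : L, lo <= x <= hi -> lo <= y <= hi ->
    x `&` y = lo -> x = lo \/ y = lo.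

(* p is the pseudo-complement of q in the semilattice {x | lo <= x},
   whose least element is lo. *)
Definition pseudo_complement_above {d} (L : latticeType d) (lo q p : L) : Prop :=
  lo <= p /\ q `&` p = lo /\
  (forall x : L, lo <= x -> q `&` x = lo -> x <= p).

Definition waist {d} (L : latticeType d) (p : L) : Prop :=
  forall x : L, x <= p \/ p <= x.

(* Main.v *)
Require Import Defs.
From mathcomp Require Import all_boot all_order.
From Stdlib Require Import Classical.
Import Order.TTheory.
Local Open Scope order_scope.

Theorem theorem1p16 (d : Order.disp_t) (L : latticeType d) (p : L) :
  complete_lattice L ->
  strongly_irreducible p ->
  irreducible p /\
  ((exists p' q : L, p' < p /\ p' <= q /\
      pseudo_complement_above p' q p /\ uniform_interval p' q)
   \/ waist p).
Proof.
move=> _ Hs; split.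
  by move=> a b _ _ /Hs.
case: (classic (waist p)) => [W|NW]; [by right|left].
have [x Hx] : exists x : L, ~ (x <= p \/ p <= x).
  apply: NNPP => H; apply: NW => y; apply: NNPP => Hy; apply: H; by exists y.
have xp : ~~ (x <= p) by apply/negP => h; apply: Hx; left.
have px : ~~ (p <= x) by apply/negP => h; apply: Hx; right.
exists (p `&` x), x; split; [|split; [|split]].
- rewrite lt_neqAle leIl andbT; apply/negP => /eqP E.
  by move: px; rewrite -E leIr.
- exact: leIr.
- split; first exact: leIl.
  split; first by rewrite meetC.
  move=> y _ E.
  have : x `&` y <= p by rewrite E leIl.
  by case/Hs => // h; move: xp; rewrite h.
- move=> a b /andP[a1 a2] /andP[b1 b2] E.
  have : a `&` b <= p by rewrite E leIl.
  case/Hs => h.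
    left; apply/eqP; rewrite eq_le a1 andbT lexI h a2 //.
  right; apply/eqP; rewrite eq_le b1 andbT lexI h b2 //.
Qed.
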